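(* Let $n\ge2$, $1\le k\le n-1$. Let $Y$ have a continuous distribution function $G$ on $[l_G,r_G]$, and let $g$ be positive, continuous and strictly decreasing on $(l_G,r_G)$ with $\lim_{y\to r_G^-}g(y)=0$; put $\tau=\lim_{y\to l_G^+}[g(y)]^{-1/(k+1)}$. Then \[ E[g(Y(n))\mid Y(n-k)=s,\ Y(n+1)=t]=[g(t)]^{k/(k+1)}[g(s)]^{1/(k+1)}\qquad (l_G<s<t<r_G) \] holds if and only if $G(y)=1-\exp\{-c([g(y)]^{-1/(k+1)}-\tau)\}$ for $l_G<y<r_G$, for some constant $c>0$.
   Context: $Y_1,Y_2,\dots$ are i.i.d. copies of $Y$ with distribution function $G$; $l_G=\inf\{y:G(y)>0\}$, $r_G=\sup\{y:G(y)<1\}$. Upper record times $L(1)=1$, $L(m)=\min\{j>L(m-1):Y_j>Y_{L(m-1)}\}$, record values $Y(m)=Y_{L(m)}$. With $R(y)=-\ln(1-G(y))$, conditional expectations given $Y(n-k)=s$, $Y(n+1)=t$ use the conditional density of $Y(n)$: $k[\frac{R(x)-R(s)}{R(t)-R(s)}]^{k-1}\frac{R'(x)}{R(t)-R(s)}$, $s<x<t$. *)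

(* Defs.v *)
From Stdlib Require Import Reals Lra.
Open Scope R_scope.

Definition is_cont_cdf (G : R -> R) : Prop :=
  (forall x y, x <= y -> G x <= G y) /\
  continuity G /\
  (forall eps, 0 < eps -> exists M, forall x, x <= M -> G x < eps) /\
  (forall eps, 0 < eps -> exists M, forall x, M <= x -> 1 - G x < eps).

(* l_G < y < r_G ; for a continuous distribution function G this is
   exactly 0 < G y < 1 (l_G = inf{G>0}, r_G = sup{G<1}). *)
Definition in_supp (G : R -> R) (y : R) : Prop := 0 < G y /\ G y < 1.

Definition Rhaz (G : R -> R) (y : R) : R := - ln (1 - G y).

(* Conditional distribution function of Y(n) given Y(n-k)=s, Y(n+1)=t on [s,t]:
   the integral from s to x of the conditional density
   k [(R(u)-R(s))/(R(t)-R(s))]^(k-1) R'(u)/(R(t)-R(s)). *)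
Definition cond_cdf (G : R -> R) (k : nat) (s t x : R) : R :=
  ((Rhaz G x - Rhaz G s) / (Rhaz G t - Rhaz G s)) ^ k.

Fixpoint RS_sum (f F : R -> R) (x xi : nat -> R) (m : nat) : R :=
  match m with
  | O => 0
  | S m' => RS_sum f F x xi m' + f (xi m') * (F (x (S m')) - F (x m'))
  end.

Definition tagged_partition (a b : R) (m : nat) (x xi : nat -> R) : Prop :=
  x O = a /\ x m = b /\ forall i, (i < m)%nat -> x i <= xi i <= x (S i).

Definition RS_integral_is (f F : R -> R) (a b I : R) : Prop :=
  forall eps, 0 < eps -> exists delta, 0 < delta /\
    forall (m : nat) (x xi : nat -> R),
      tagged_partition a b m x xi ->
      (forall i, (i < m)%nat -> x (S i) - x i < delta) ->
      Rabs (RS_sum f F x xi m - I) < eps.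

(* E[g(Y(n)) | Y(n-k)=s, Y(n+1)=t] = v, i.e. the Stieltjes integral of g
   against the conditional distribution function on [s,t] equals v. *)
Definition cond_exp_record_is (G : R -> R) (k : nat) (g : R -> R) (s t v : R) : Prop :=
  RS_integral_is g (cond_cdf G k s t) s t v.

(* Main.v *)
Require Import Defs.
From Stdlib Require Import Reals Lra Lia ZArith.
Open Scope R_scope.

Lemma RS_sum_ext_F f F1 F2 x xi m :
  (forall y, F1 y = F2 y) -> RS_sum f F1 x xi m = RS_sum f F2 x xi m.
Proof. intros H; induction m; simpl; auto. rewrite IHm, !H; reflexivity. Qed.

Lemma RS_sum_scale f F c x xi m :
  RS_sum f (fun y => c * F y) x xi m = c * RS_sum f F x xi m.
Proof. induction m; simpl. ring. rewrite IHm; ring. Qed.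

Lemma RS_sum_const f c x xi m :
  RS_sum f (fun _ => c) x xi m = 0.
Proof. induction m; simpl. ring. rewrite IHm; ring. Qed.

Lemma RS_sum_bound f F P Q x xi m :
  (forall i, (i < m)%nat ->
     Rabs (f (xi i) * (F (x (S i)) - F (x i)) - (P (x (S i)) - P (x i)))
       <= Q (x i) - Q (x (S i))) ->
  Rabs (RS_sum f F x xi m - (P (x m) - P (x O))) <= Q (x O) - Q (x m).
Proof.
  induction m; intros H; simpl.
  - replace (0 - (P (x O) - P (x O))) with 0 by ring. rewrite Rabs_R0. lra.
  - assert (H1 := IHm (fun i Hi => H i (Nat.lt_lt_succ_r _ _ Hi))).
    assert (H2 := H m (Nat.lt_succ_diag_r m)).
    replace (Q (x O) - Q (x (S m))) with ((Q (x O) - Q (x m)) + (Q (x m) - Q (x (S m)))) by ring.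
    eapply Rle_trans. 2: { apply Rplus_le_compat; [exact H1 | exact H2]. }
    eapply Rle_trans. 2: apply Rabs_triang. right; f_equal; ring.
Qed.

Lemma RS_sum_mono f F lo hi x xi m :
  (forall i, (i < m)%nat -> F (x i) <= F (x (S i))) ->
  (forall i, (i < m)%nat -> lo <= f (xi i) <= hi) ->
  lo * (F (x m) - F (x O)) <= RS_sum f F x xi m <= hi * (F (x m) - F (x O)).
Proof.
  induction m; intros HF Hf; simpl.
  - split; right; ring.
  - assert (H1 := IHm (fun i Hi => HF i (Nat.lt_lt_succ_r _ _ Hi))
                      (fun i Hi => Hf i (Nat.lt_lt_succ_r _ _ Hi))).
    assert (H2 := HF m (Nat.lt_succ_diag_r m)).
    assert (H3 := Hf m (Nat.lt_succ_diag_r m)).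
    assert (lo * (F (x (S m)) - F (x m)) <= f (xi m) * (F (x (S m)) - F (x m))
            <= hi * (F (x (S m)) - F (x m))).
    { split; apply Rmult_le_compat_r; lra. }
    split; nra.
Qed.

Definition upart (a b : R) (N : nat) (i : nat) : R := a + INR i * ((b - a) / INR N).

Lemma upart_ok a b d : a < b -> 0 < d ->
  exists N, (0 < N)%nat /\ tagged_partition a b N (upart a b N) (upart a b N) /\
    (forall i, (i < N)%nat -> upart a b N (S i) - upart a b N i < d) /\
    (forall i, (i <= N)%nat -> a <= upart a b N i <= b) /\
    (forall i, (i < N)%nat -> upart a b N i < upart a b N (S i)).
Proof.
  intros Hab Hd.
  destruct (archimed ((b - a) / d)) as [Ha _].
  assert (Hpos : 0 < (b - a) / d) by (apply Rdiv_lt_0_compat; lra).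
  assert (Hz : (0 < Z.to_nat (up ((b - a) / d)))%nat).
  { assert (0 < up ((b-a)/d))%Z. { apply lt_IZR. lra. } lia. }
  set (N := Z.to_nat (up ((b - a) / d))).
  assert (HN : (b - a) / d < INR N).
  { unfold N. rewrite INR_IZR_INZ, Z2Nat.id. lra.
    apply le_IZR. lra. }
  assert (HNp : 0 < INR N) by (apply lt_0_INR; exact Hz).
  assert (Hstep : 0 < (b - a) / INR N) by (apply Rdiv_lt_0_compat; lra).
  assert (Hstep2 : (b - a) / INR N < d).
  { apply Rmult_lt_reg_r with (INR N); auto.
    unfold Rdiv. rewrite Rmult_assoc, Rinv_l by lra.
    apply Rmult_lt_reg_r with (/ d). apply Rinv_0_lt_compat; lra.
    rewrite Rmult_1_r. rewrite (Rmult_comm d), Rmult_assoc, Rinv_r, Rmult_1_r by lra.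
    exact HN. }
  exists N. unfold upart. split; [exact Hz|]. split; [|split; [|split]].
  - split; [|split].
    + simpl; ring.
    + field; lra.
    + intros i Hi. rewrite S_INR. nra.
  - intros i Hi. rewrite S_INR. lra.
  - intros i Hi. split.
    + assert (0 <= INR i) by apply pos_INR. nra.
    + apply le_INR in Hi.
      assert (INR i * ((b - a) / INR N) <= INR N * ((b - a) / INR N)) by nra.
      replace (INR N * ((b - a) / INR N)) with (b - a) in H by (field; lra). lra.
  - intros i Hi. rewrite S_INR. lra.
Qed.

Lemma RS_unique f F a b I1 I2 : a < b ->
  RS_integral_is f F a b I1 -> RS_integral_is f F a b I2 -> I1 = I2.
Proof.
  intros Hab H1 H2.
  destruct (Req_dec I1 I2) as [|Hne]; auto.
  set (e := Rabs (I1 - I2) / 2).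
  assert (He : 0 < e) by (unfold e; assert (0 < Rabs (I1 - I2)) by (apply Rabs_pos_lt; lra); lra).
  destruct (H1 e He) as [d1 [Hd1 P1]]. destruct (H2 e He) as [d2 [Hd2 P2]].
  destruct (upart_ok a b (Rmin d1 d2) Hab) as [N [_ [Ht [Hm _]]]].
  { apply Rmin_pos; auto. }
  assert (A1 := P1 N _ _ Ht (fun i Hi => Rlt_le_trans _ _ _ (Hm i Hi) (Rmin_l _ _))).
  assert (A2 := P2 N _ _ Ht (fun i Hi => Rlt_le_trans _ _ _ (Hm i Hi) (Rmin_r _ _))).
  assert (Rabs (I1 - I2) < 2 * e).
  { set (S := RS_sum f F (upart a b N) (upart a b N) N) in *.
    replace (I1 - I2) with (-(S - I1) + (S - I2)) by ring.
    eapply Rle_lt_trans. apply Rabs_triang. rewrite Rabs_Ropp. lra. }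
  unfold e in H. lra.
Qed.

Definition cat_x (m1 : nat) (x1 x2 : nat -> R) (i : nat) : R :=
  if Nat.leb i m1 then x1 i else x2 (i - m1)%nat.
Definition cat_xi (m1 : nat) (x1 x2 : nat -> R) (i : nat) : R :=
  if Nat.ltb i m1 then x1 i else x2 (i - m1)%nat.

Lemma RS_sum_cat f F m1 m2 x1 xi1 x2 xi2 :
  x1 m1 = x2 O ->
  RS_sum f F (cat_x m1 x1 x2) (cat_xi m1 xi1 xi2) (m1 + m2) =
  RS_sum f F x1 xi1 m1 + RS_sum f F x2 xi2 m2.
Proof.
  intros Hj.
  assert (A : forall j, (j <= m1)%nat ->
     RS_sum f F (cat_x m1 x1 x2) (cat_xi m1 xi1 xi2) j = RS_sum f F x1 xi1 j).
  { induction j; intros Hj'; simpl; auto.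
    rewrite IHj by lia. unfold cat_x, cat_xi.
    replace (Nat.leb (S j) m1) with true by (symmetry; apply Nat.leb_le; lia).
    replace (Nat.leb j m1) with true by (symmetry; apply Nat.leb_le; lia).
    replace (Nat.ltb j m1) with true by (symmetry; apply Nat.ltb_lt; lia).
    reflexivity. }
  induction m2.
  - rewrite Nat.add_0_r, A by lia. simpl; ring.
  - rewrite Nat.add_succ_r. simpl. rewrite IHm2.
    unfold cat_x, cat_xi.
    replace (Nat.leb (S (m1 + m2)) m1) with false by (symmetry; apply Nat.leb_gt; lia).
    replace (Nat.ltb (m1 + m2) m1) with false by (symmetry; apply Nat.ltb_ge; lia).
    replace (S (m1 + m2) - m1)%nat with (S m2) by lia.
    replace (m1 + m2 - m1)%nat with m2 by lia.
    destruct m2.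
    + replace (Nat.leb (m1 + 0) m1) with true by (symmetry; apply Nat.leb_le; lia).
      rewrite Nat.add_0_r, Hj. ring.
    + replace (Nat.leb (m1 + S m2) m1) with false by (symmetry; apply Nat.leb_gt; lia).
      ring.
Qed.

Lemma tagged_cat a b c m1 m2 x1 xi1 x2 xi2 :
  tagged_partition a b m1 x1 xi1 -> tagged_partition b c m2 x2 xi2 ->
  tagged_partition a c (m1 + m2) (cat_x m1 x1 x2) (cat_xi m1 xi1 xi2).
Proof.
  intros [H1 [H2 H3]] [K1 [K2 K3]]. unfold cat_x, cat_xi. split; [|split].
  - simpl. exact H1.
  - destruct (Nat.leb_spec (m1 + m2) m1).
    + assert (m2 = O) by lia. subst. rewrite Nat.add_0_r. congruence.
    + replace (m1 + m2 - m1)%nat with m2 by lia. exact K2.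
  - intros i Hi.
    destruct (Nat.ltb_spec i m1).
    + replace (Nat.leb i m1) with true by (symmetry; apply Nat.leb_le; lia).
      replace (Nat.leb (S i) m1) with true by (symmetry; apply Nat.leb_le; lia).
      apply H3; auto.
    + replace (Nat.leb (S i) m1) with false by (symmetry; apply Nat.leb_gt; lia).
      replace (S i - m1)%nat with (S (i - m1)) by lia.
      destruct (Nat.leb_spec i m1).
      * assert (i = m1) by lia. subst i. rewrite Nat.sub_diag, H2, <- K1.
        apply K3. lia.
      * apply K3. lia.
Qed.

Lemma mesh_cat d m1 m2 x1 x2 :
  x1 m1 = x2 O ->
  (forall i, (i < m1)%nat -> x1 (S i) - x1 i < d) ->
  (forall i, (i < m2)%nat -> x2 (S i) - x2 i < d) ->
  (forall i, (i < m1 + m2)%nat -> cat_x m1 x1 x2 (S i) - cat_x m1 x1 x2 i < d).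
Proof.
  intros Hj H1 H2 i Hi. unfold cat_x.
  destruct (Nat.ltb_spec i m1).
  + replace (Nat.leb i m1) with true by (symmetry; apply Nat.leb_le; lia).
    replace (Nat.leb (S i) m1) with true by (symmetry; apply Nat.leb_le; lia).
    apply H1; auto.
  + replace (Nat.leb (S i) m1) with false by (symmetry; apply Nat.leb_gt; lia).
    replace (S i - m1)%nat with (S (i - m1)) by lia.
    destruct (Nat.leb_spec i m1).
    * assert (i = m1) by lia. subst i. rewrite Nat.sub_diag, Hj. apply H2. lia.
    * apply H2. lia.
Qed.

Lemma dpl_eq f x l l' : derivable_pt_lim f x l -> l = l' -> derivable_pt_lim f x l'.
Proof. intros H ->; exact H. Qed.

Lemma dpl_D a m c : derivable_pt_lim (fun u => (u - a) ^ S m) c (INR (S m) * (c - a) ^ m).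
Proof.
  assert (H1 : derivable_pt_lim (fun u => u - a) c 1).
  { apply dpl_eq with (1 - 0). apply (derivable_pt_lim_minus id (fct_cte a)).
    apply derivable_pt_lim_id. apply derivable_pt_lim_const. ring. }
  assert (H2 := derivable_pt_lim_pow (c - a) (S m)).
  assert (H3 := derivable_pt_lim_comp _ _ _ _ _ H1 H2).
  eapply dpl_eq. exact H3. simpl. ring.
Qed.

Lemma dpl_E a m c : 0 < a -> 0 < c ->
  derivable_pt_lim (fun u => (u - a) ^ S m / (a * u ^ S m)) c
     (INR (S m) * (c - a) ^ m / c ^ S (S m)).
Proof.
  intros Ha Hc.
  assert (H1 : derivable_pt_lim (fun u => a * u ^ S m) c (0 * c ^ S m + a * (INR (S m) * c ^ m))).
  { apply (derivable_pt_lim_mult (fct_cte a) (fun y => y ^ S m)).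
    apply derivable_pt_lim_const. apply (derivable_pt_lim_pow c (S m)). }
  assert (Hn : a * c ^ S m <> 0).
  { assert (0 < c ^ S m) by (apply pow_lt; auto). nra. }
  assert (H2 := derivable_pt_lim_div _ _ _ _ _ (dpl_D a m c) H1 Hn).
  eapply dpl_eq. exact H2.
  assert (0 < c ^ m) by (apply pow_lt; auto).
  simpl. unfold Rsqr. field. split; lra.
Qed.

Lemma KL a m u1 u2 : 0 < a -> a <= u1 -> u1 <= u2 ->
  / u2 ^ S (S m) * ((u2 - a) ^ S m - (u1 - a) ^ S m)
    <= (u2 - a) ^ S m / (a * u2 ^ S m) - (u1 - a) ^ S m / (a * u1 ^ S m)
    <= / u1 ^ S (S m) * ((u2 - a) ^ S m - (u1 - a) ^ S m).
Proof.
  intros Ha H1 H12.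
  destruct (Req_dec u1 u2) as [<-|Hne].
  { split; right; ring. }
  set (D := fun u => (u - a) ^ S m).
  set (E := fun u => (u - a) ^ S m / (a * u ^ S m)).
  set (dD := D u2 - D u1). set (dE := E u2 - E u1).
  set (chi := fun u => E u * dD - D u * dE).
  destruct (MVT_cor2 chi (fun c => (INR (S m) * (c - a) ^ m / c ^ S (S m)) * dD
                                   - (INR (S m) * (c - a) ^ m) * dE) u1 u2)
    as [c [Hc1 Hc2]]; [lra| |].
  { intros c Hc. unfold chi.
    apply (derivable_pt_lim_minus (fun u => E u * dD) (fun u => D u * dE)).
    - eapply dpl_eq. apply (derivable_pt_lim_mult E (fct_cte dD)).
      apply dpl_E; lra. apply derivable_pt_lim_const. unfold fct_cte. ring.
    - eapply dpl_eq. apply (derivable_pt_lim_mult D (fct_cte dE)).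
      apply dpl_D. apply derivable_pt_lim_const. unfold fct_cte. ring. }
  assert (Hchi : chi u2 - chi u1 = 0) by (unfold chi, dD, dE; ring).
  rewrite Hchi in Hc1.
  assert (Hca : 0 < c - a) by lra.
  assert (Hcm : 0 < (c - a) ^ m) by (apply pow_lt; lra).
  assert (Hcp : 0 < c ^ S (S m)) by (apply pow_lt; lra).
  assert (Hm : 0 < INR (S m)) by (apply lt_0_INR; lia).
  assert (HdE : dE = dD / c ^ S (S m)).
  { assert (Hz : INR (S m) * (c - a) ^ m / c ^ S (S m) * dD - INR (S m) * (c - a) ^ m * dE = 0).
    { apply Rmult_eq_reg_r with (u2 - u1). rewrite Rmult_0_l. lra. lra. }
    assert (Hz2 : (INR (S m) * (c - a) ^ m) * (dD / c ^ S (S m) - dE) = 0).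
    { rewrite <- Hz. field. lra. }
    apply Rmult_integral in Hz2. destruct Hz2 as [Hz2|Hz2]. nra. lra. }
  assert (HdD : 0 <= dD).
  { unfold dD, D. assert (HH := pow_incr (u1 - a) (u2 - a) (S m)). lra. }
  change (/ u2 ^ S (S m) * dD <= dE <= / u1 ^ S (S m) * dD). rewrite HdE. unfold Rdiv. rewrite (Rmult_comm dD).
  split; apply Rmult_le_compat_r; auto; apply Rinv_le_contravar.
  apply pow_lt; lra. apply pow_incr; lra. apply pow_lt; lra. apply pow_incr; lra.
Qed.


Lemma Rdiv_le0 a b : 0 <= a -> 0 < b -> 0 <= a / b.
Proof. intros. unfold Rdiv. apply Rmult_le_pos; auto. apply Rlt_le, Rinv_0_lt_compat; auto. Qed.

Lemma pow_div x y n : (x / y) ^ n = x ^ n / y ^ n.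
Proof. unfold Rdiv. rewrite Rpow_mult_distr, pow_inv. reflexivity. Qed.

Lemma pow_lt_mono x y n : 0 <= x < y -> x ^ S n < y ^ S n.
Proof.
  intros H. induction n.
  - simpl; lra.
  - change (x * x ^ S n < y * y ^ S n).
    assert (0 <= x ^ S n) by (apply pow_le; lra). nra.
Qed.

Lemma pow_inj_pos x y n : 0 <= x -> 0 <= y -> x ^ S n = y ^ S n -> x = y.
Proof.
  intros Hx Hy H. destruct (Rtotal_order x y) as [Hl|[He|Hl]]; auto.
  - assert (HH := pow_lt_mono x y n (conj Hx Hl)). lra.
  - assert (HH := pow_lt_mono y x n (conj Hy Hl)). lra.
Qed.

Lemma upart_in a b N i : (0 < N)%nat -> (i <= N)%nat -> a <= b -> a <= upart a b N i <= b.
Proof.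
  intros HN Hi Hab. unfold upart.
  assert (HNp : 0 < INR N) by (apply lt_0_INR; exact HN).
  assert (0 <= INR i) by apply pos_INR.
  apply le_INR in Hi.
  assert (0 <= (b - a) / INR N) by (apply Rdiv_le0; lra).
  split. nra.
  assert (INR i * ((b - a) / INR N) <= INR N * ((b - a) / INR N)) by nra.
  replace (INR N * ((b - a) / INR N)) with (b - a) in H1 by (field; lra). lra.
Qed.

Lemma tele_bound (Z Q : R -> R) (x : nat -> R) N :
  (forall i, (i < N)%nat -> Rabs (Z (x (S i)) - Z (x i)) <= Q (x i) - Q (x (S i))) ->
  Rabs (Z (x N) - Z (x O)) <= Q (x O) - Q (x N).
Proof.
  induction N; intros H.
  - rewrite Rminus_diag, Rabs_R0. lra.
  - assert (H1 := IHN (fun i Hi => H i (Nat.lt_lt_succ_r _ _ Hi))).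
    assert (H2 := H N (Nat.lt_succ_diag_r N)).
    replace (Z (x (S N)) - Z (x O)) with ((Z (x N) - Z (x O)) + (Z (x (S N)) - Z (x N))) by ring.
    eapply Rle_trans. apply Rabs_triang. lra.
Qed.

Lemma cont_powa a m z : continuity_pt (fun u => (u - a) ^ S m) z.
Proof. apply derivable_continuous_pt. exists (INR (S m) * (z - a) ^ m). apply dpl_D. Qed.

Lemma small_zero d : (forall e, 0 < e -> Rabs d < e) -> d = 0.
Proof.
  intros H. destruct (Req_dec d 0) as [|Hd]; auto.
  assert (HH := H (Rabs d) (Rabs_pos_lt d Hd)). lra.
Qed.

Section Rev.
Variables (Sp : R -> Prop) (g h Rf : R -> R) (m : nat).
Hypothesis Hconv : forall x y z, Sp x -> Sp z -> x <= y <= z -> Sp y.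
Hypothesis HRmon : forall x y, Sp x -> Sp y -> x <= y -> Rf x <= Rf y.
Hypothesis Hhpos : forall y, Sp y -> 0 < h y.
Hypothesis Hgmon : forall x y, Sp x -> Sp y -> x <= y -> g y <= g x.
Hypothesis Hid : forall s t, Sp s -> Sp t -> s < t ->
  RS_integral_is g (fun x => ((Rf x - Rf s) / (Rf t - Rf s)) ^ S m) s t (/ (h s * h t ^ S m)).

Lemma Rf_strict s t : Sp s -> Sp t -> s < t -> Rf s < Rf t.
Proof.
  intros Hs Ht Hst. destruct (HRmon s t Hs Ht (Rlt_le _ _ Hst)) as [|Heq]; auto.
  exfalso. assert (Hv : 0 < / (h s * h t ^ S m)).
  { apply Rinv_0_lt_compat. apply Rmult_lt_0_compat. auto. apply pow_lt; auto. }
  destruct (Hid s t Hs Ht Hst _ Hv) as [d [Hd P]].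
  destruct (upart_ok s t d Hst Hd) as [N [_ [Htp [Hm _]]]].
  specialize (P N _ _ Htp Hm).
  rewrite (RS_sum_ext_F _ _ (fun _ => 0)) in P.
  - rewrite RS_sum_const in P. rewrite Rabs_minus_sym, Rminus_0_r, Rabs_right in P; lra.
  - intros y. rewrite Heq, Rminus_diag. unfold Rdiv. rewrite Rinv_0, Rmult_0_r. simpl; ring.
Qed.

Lemma sandwich s t t' : Sp s -> Sp t' -> s < t -> t < t' ->
  g t' * ((Rf t' - Rf s) ^ S m - (Rf t - Rf s) ^ S m)
   <= (Rf t' - Rf s) ^ S m / (h s * h t' ^ S m) - (Rf t - Rf s) ^ S m / (h s * h t ^ S m)
   <= g t * ((Rf t' - Rf s) ^ S m - (Rf t - Rf s) ^ S m).
Proof.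
  intros Hs Ht' Hst Htt'.
  assert (Ht : Sp t) by (apply (Hconv s t t'); auto; lra).
  assert (HA : 0 < Rf t - Rf s) by (assert (HH := Rf_strict s t Hs Ht Hst); lra).
  assert (HB : Rf t - Rf s < Rf t' - Rf s) by (assert (HH := Rf_strict t t' Ht Ht' Htt'); lra).
  set (A := Rf t - Rf s) in *. set (B := Rf t' - Rf s) in *.
  set (rho := (A / B) ^ S m).
  assert (Hrho : 0 < rho < 1).
  { unfold rho. split. apply pow_lt. apply Rdiv_lt_0_compat; lra.
    replace 1 with (1 ^ S m) by apply pow1. apply pow_lt_mono. split.
    apply Rlt_le, Rdiv_lt_0_compat; lra.
    apply Rmult_lt_reg_r with B. lra. unfold Rdiv. rewrite Rmult_assoc, Rinv_l; lra. }
  set (v1 := / (h s * h t ^ S m)). set (v2 := / (h s * h t' ^ S m)).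
  set (F1 := fun x => ((Rf x - Rf s) / A) ^ S m).
  set (F2 := fun x => ((Rf x - Rf s) / B) ^ S m).
  assert (HF : forall y, F2 y = rho * F1 y).
  { intros y. unfold F1, F2, rho. rewrite <- Rpow_mult_distr. f_equal. field. lra. }
  assert (Key : forall e, 0 < e -> exists N2, (0 < N2)%nat /\ tagged_partition t t' N2 (upart t t' N2) (upart t t' N2) /\
      (forall i, (i <= N2)%nat -> t <= upart t t' N2 i <= t') /\
      (forall i, (i < N2)%nat -> upart t t' N2 i < upart t t' N2 (S i)) /\
      Rabs (v2 - rho * v1 - RS_sum g F2 (upart t t' N2) (upart t t' N2) N2) < e).
  { intros e He.
    assert (He2 : 0 < e / 2) by lra.
    destruct (Hid s t Hs Ht Hst _ He2) as [d1 [Hd1 P1]].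
    destruct (Hid s t' Hs Ht' (Rlt_trans _ _ _ Hst Htt') _ He2) as [d2 [Hd2 P2]].
    assert (Hd : 0 < Rmin d1 d2) by (apply Rmin_pos; auto).
    destruct (upart_ok s t _ Hst Hd) as [N1 [HN1 [Htp1 [Hm1 _]]]].
    destruct (upart_ok t t' _ Htt' Hd) as [N2 [HN2 [Htp2 [Hm2 [Hin2 Hinc2]]]]].
    assert (Hj : upart s t N1 N1 = upart t t' N2 O) by
      (destruct Htp1 as [_ [-> _]]; destruct Htp2 as [-> _]; reflexivity).
    assert (Q1 := P1 N1 _ _ Htp1 (fun i Hi => Rlt_le_trans _ _ _ (Hm1 i Hi) (Rmin_l _ _))).
    assert (Q2 := P2 _ _ _ (tagged_cat _ _ _ _ _ _ _ _ _ Htp1 Htp2)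
             (mesh_cat _ _ _ _ _ Hj (fun i Hi => Rlt_le_trans _ _ _ (Hm1 i Hi) (Rmin_r _ _))
                (fun i Hi => Rlt_le_trans _ _ _ (Hm2 i Hi) (Rmin_r _ _)))).
    rewrite RS_sum_cat in Q2 by exact Hj.
    change (Rabs (RS_sum g F1 (upart s t N1) (upart s t N1) N1 - v1) < e / 2) in Q1.
    change (Rabs (RS_sum g F2 (upart s t N1) (upart s t N1) N1 + RS_sum g F2 (upart t t' N2) (upart t t' N2) N2 - v2) < e / 2) in Q2.
    rewrite (RS_sum_ext_F _ F2 (fun y => rho * F1 y) _ _ N1 HF), RS_sum_scale in Q2.
    exists N2. split; [exact HN2|]. split; [exact Htp2|]. split; [exact Hin2|]. split; [exact Hinc2|].
    set (S1 := RS_sum g F1 (upart s t N1) (upart s t N1) N1) in *.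
    set (S2 := RS_sum g F2 (upart t t' N2) (upart t t' N2) N2) in *.
    replace (v2 - rho * v1 - S2) with (- (rho * S1 + S2 - v2) + rho * (S1 - v1)) by ring.
    eapply Rle_lt_trans. apply Rabs_triang. rewrite Rabs_Ropp, Rabs_mult, (Rabs_right rho) by lra.
    assert (rho * Rabs (S1 - v1) <= Rabs (S1 - v1)).
    { assert (0 <= Rabs (S1 - v1)) by apply Rabs_pos. nra. }
    lra. }
  assert (Key2 : g t' * (1 - rho) <= v2 - rho * v1 <= g t * (1 - rho)).
  { split; apply Rle_plus_epsilon; intros e He; destruct (Key e He) as [N2 [HN2 [Htp2 [Hin2 [Hinc2 Hb]]]]];
    assert (M := RS_sum_mono g F2 (g t') (g t) (upart t t' N2) (upart t t' N2) N2);
    destruct Htp2 as [E0 [EN _]]; rewrite E0, EN in M;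
    (assert (HF2t : F2 t = rho) by (unfold F2, rho; reflexivity));
    (assert (HF2t' : F2 t' = 1) by (unfold F2; unfold Rdiv; rewrite Rinv_r, pow1; lra));
    rewrite HF2t, HF2t' in M;
    (assert (Hnodes : forall i, (i <= N2)%nat -> Sp (upart t t' N2 i))
      by (intros i Hi; apply (Hconv s _ t'); auto; assert (HH := Hin2 i Hi); lra));
    (assert (M' : g t' * (1 - rho) <= RS_sum g F2 (upart t t' N2) (upart t t' N2) N2 <= g t * (1 - rho));
      [ apply M; [ intros i Hi; assert (S1 := Hnodes i (Nat.lt_le_incl _ _ Hi));
        assert (S2 := Hnodes (S i) Hi); assert (B1 := Hin2 i (Nat.lt_le_incl _ _ Hi));
        assert (B2 := Hinc2 i Hi);
        unfold F2; apply pow_incr; split;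
        [ apply Rdiv_le0; [assert (HH := HRmon s _ Hs S1 ltac:(lra)); lra | lra]
        | unfold Rdiv; apply Rmult_le_compat_r; [apply Rlt_le, Rinv_0_lt_compat; lra|];
          assert (HH := HRmon _ _ S1 S2 ltac:(lra)); lra ]
      | intros i Hi; assert (S1 := Hnodes i (Nat.lt_le_incl _ _ Hi));
        assert (B1 := Hin2 i (Nat.lt_le_incl _ _ Hi));
        split; [apply Hgmon | apply Hgmon]; auto; lra ] | ]);
    apply Rabs_def2 in Hb; lra. }
  assert (HBk : 0 < B ^ S m) by (apply pow_lt; lra).
  assert (HAk : A ^ S m = rho * B ^ S m).
  { unfold rho. rewrite <- Rpow_mult_distr. f_equal. field. lra. }
  unfold Rdiv. fold v1 v2. rewrite HAk.
  split; [apply Rle_trans with (B ^ S m * (g t' * (1 - rho)))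
         | apply Rle_trans with (B ^ S m * (g t * (1 - rho)))].
  right; ring. replace (B ^ S m * v2 - rho * B ^ S m * v1) with (B ^ S m * (v2 - rho * v1)) by ring.
  apply Rmult_le_compat_l; lra.
  replace (B ^ S m * v2 - rho * B ^ S m * v1) with (B ^ S m * (v2 - rho * v1)) by ring.
  apply Rmult_le_compat_l; lra. right; ring.
Qed.

Hypothesis Hh_inc : forall x y, Sp x -> Sp y -> x < y -> h x < h y.
Hypothesis Hg_h : forall y, Sp y -> g y = / h y ^ S (S m).
Hypothesis Hh_cont : forall y, Sp y -> continuity_pt h y.

Lemma pair_bound s x y : Sp s -> Sp y -> s < x -> x < y ->
  let a := h s in
  let D := fun z => (h z - a) ^ S m in
  let Z := fun z => (Rf z - Rf s) ^ S m / D z in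
  let psi := fun z => ((h z - a) / h z) ^ S (S m) / a in
  (Z y - Z x) * psi x <= Z y * ((g x - g y) * (D y - D x)) /\
  - (Z x * ((g x - g y) * (D y - D x))) <= (Z y - Z x) * psi y.
Proof.
  intros Hs Hy Hsx Hxy a D Z psi.
  assert (Hx : Sp x) by (apply (Hconv s x y); auto; lra).
  assert (Ha : 0 < a) by (apply Hhpos; auto).
  assert (Hax : a < h x) by (apply Hh_inc; auto).
  assert (Hxy' : h x < h y) by (apply Hh_inc; auto).
  assert (HDx : 0 < D x) by (apply pow_lt; lra).
  assert (HDy : 0 < D y) by (apply pow_lt; lra).
  assert (Hux : 0 < h x ^ S m) by (apply pow_lt; lra).
  assert (Huy : 0 < h y ^ S m) by (apply pow_lt; lra).
  assert (HZx : 0 <= Z x).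
  { apply Rdiv_le0; auto. apply pow_le. assert (HH := HRmon s x Hs Hx ltac:(lra)); lra. }
  assert (HZy : 0 <= Z y).
  { apply Rdiv_le0; auto. apply pow_le. assert (HH := HRmon s y Hs Hy ltac:(lra)); lra. }
  assert (Hsw := sandwich s x y Hs Hy Hsx Hxy).
  assert (HK := KL a m (h x) (h y) Ha (Rlt_le _ _ Hax) (Rlt_le _ _ Hxy')).
  rewrite <- !Hg_h in HK by auto.
  set (Ex := (h x - a) ^ S m / (a * h x ^ S m)) in *.
  set (Ey := (h y - a) ^ S m / (a * h y ^ S m)) in *.
  assert (HWx : (Rf x - Rf s) ^ S m = Z x * D x) by (unfold Z; field; lra).
  assert (HWy : (Rf y - Rf s) ^ S m = Z y * D y) by (unfold Z; field; lra).
  assert (HEx : (Rf x - Rf s) ^ S m / (h s * h x ^ S m) = Z x * Ex)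
    by (rewrite HWx; unfold Ex, D; fold a; field; lra).
  assert (HEy : (Rf y - Rf s) ^ S m / (h s * h y ^ S m) = Z y * Ey)
    by (rewrite HWy; unfold Ey, D; fold a; field; lra).
  rewrite HEx, HEy, HWx, HWy in Hsw.
  assert (Hpx : psi x = Ex - g x * D x).
  { unfold psi, Ex, D. rewrite Hg_h by auto.
    rewrite pow_div. simpl. field. assert (0 < h x ^ m) by (apply pow_lt; lra). repeat split; lra. }
  assert (Hpy : psi y = Ey - g y * D y).
  { unfold psi, Ey, D. rewrite Hg_h by auto.
    rewrite pow_div. simpl. field. assert (0 < h y ^ m) by (apply pow_lt; lra). repeat split; lra. }
  rewrite Hpx, Hpy. fold (D x) (D y) in HK. split.
  - assert (0 <= Z y * (Ey - Ex - g y * (D y - D x))) by (apply Rmult_le_pos; lra). lra.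
  - assert (0 <= Z x * (g x * (D y - D x) - (Ey - Ex))) by (apply Rmult_le_pos; lra). lra.
Qed.

Lemma Z_const s t0 t1 : Sp s -> Sp t1 -> s < t0 -> t0 < t1 ->
  let a := h s in
  let D := fun z => (h z - a) ^ S m in
  let Z := fun z => (Rf z - Rf s) ^ S m / D z in
  Z t1 = Z t0.
Proof.
  intros Hs Ht1 Hs0 H01 a D Z.
  set (psi := fun z => ((h z - a) / h z) ^ S (S m) / a).
  assert (Ht0 : Sp t0) by (apply (Hconv s t0 t1); auto; lra).
  assert (Hin : forall z, t0 <= z <= t1 -> Sp z) by (intros z Hz; apply (Hconv s z t1); auto; lra).
  assert (Ha : 0 < a) by (apply Hhpos; auto).
  assert (Ha0 : a < h t0) by (apply Hh_inc; auto; lra).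
  assert (HD0 : 0 < D t0) by (apply pow_lt; lra).
  set (m0 := psi t0).
  assert (Hm0 : 0 < m0).
  { unfold m0, psi. apply Rdiv_lt_0_compat; auto. apply pow_lt. apply Rdiv_lt_0_compat; lra. }
  assert (Hpsi : forall z, t0 <= z <= t1 -> m0 <= psi z).
  { intros z Hz. unfold m0, psi. unfold Rdiv at 1 3. apply Rmult_le_compat_r.
    apply Rlt_le, Rinv_0_lt_compat; auto.
    assert (h t0 <= h z).
    { destruct (Req_dec t0 z) as [<-|]. lra. apply Rlt_le, Hh_inc; auto. lra. }
    apply pow_incr. split. apply Rdiv_le0; lra.
    replace ((h t0 - a) / h t0) with (1 - a / h t0) by (field; lra).
    replace ((h z - a) / h z) with (1 - a / h z) by (field; lra).
    assert (a / h z <= a / h t0).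
    { unfold Rdiv. apply Rmult_le_compat_l. lra. apply Rinv_le_contravar; lra. }
    lra. }
  set (Zm := (Rf t1 - Rf s) ^ S m / D t0).
  assert (HZ : forall z, t0 <= z <= t1 -> 0 <= Z z <= Zm).
  { intros z Hz. assert (Sz := Hin z Hz).
    assert (Hhz : h t0 <= h z).
    { destruct (Req_dec t0 z) as [<-|]. lra. apply Rlt_le, Hh_inc; auto. lra. }
    assert (HDz : D t0 <= D z) by (apply pow_incr; lra).
    assert (HR1 := HRmon s z Hs Sz ltac:(lra)).
    assert (HR2 := HRmon z t1 Sz Ht1 ltac:(lra)).
    assert (HW : (Rf z - Rf s) ^ S m <= (Rf t1 - Rf s) ^ S m) by (apply pow_incr; lra).
    assert (HW0 : 0 <= (Rf z - Rf s) ^ S m) by (apply pow_le; lra).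
    unfold Z, Zm. split. apply Rdiv_le0; lra.
    unfold Rdiv. apply Rle_trans with ((Rf t1 - Rf s) ^ S m * / D z).
    apply Rmult_le_compat_r; auto. apply Rlt_le, Rinv_0_lt_compat; lra.
    apply Rmult_le_compat_l. lra. apply Rinv_le_contravar; lra. }
  assert (HZm : 0 <= Zm) by (destruct (HZ t0); lra).
  assert (Hunif : uniform_continuity D (fun c => t0 <= c <= t1)).
  { apply Heine. apply compact_P3. intros z Hz.
    apply (continuity_pt_comp h (fun u => (u - a) ^ S m)). apply Hh_cont; auto. apply cont_powa. }
  assert (Hg01 : g t1 <= g t0) by (apply Hgmon; auto; lra).
  apply Rminus_diag_uniq. apply small_zero. intros e He.
  set (C := Zm / m0 * (g t0 - g t1) + 1).
  assert (HC : 0 < C).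
  { unfold C. assert (0 <= Zm / m0 * (g t0 - g t1)). apply Rmult_le_pos. apply Rdiv_le0; lra. lra. lra. }
  destruct (Hunif (mkposreal (e / C) (Rdiv_lt_0_compat _ _ He HC))) as [d Hd]. simpl in Hd.
  destruct (upart_ok t0 t1 d H01 (cond_pos d)) as [N [HN [[E0 [EN _]] [Hm [Hinn Hinc]]]]].
  assert (Hb := tele_bound Z (fun z => Zm / m0 * (e / C) * g z) (upart t0 t1 N) N).
  rewrite E0, EN in Hb.
  assert (Hfin : Zm / m0 * (e / C) * g t0 - Zm / m0 * (e / C) * g t1 < e).
  { replace (Zm / m0 * (e / C) * g t0 - Zm / m0 * (e / C) * g t1) with
      (e * (Zm / m0 * (g t0 - g t1) / C)) by (field; lra).
    rewrite <- (Rmult_1_r e) at 2. apply Rmult_lt_compat_l; auto.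
    apply Rmult_lt_reg_r with C; auto. unfold Rdiv. rewrite Rmult_assoc, Rinv_l by lra.
    unfold C. lra. }
  eapply Rle_lt_trans; [apply Hb|exact Hfin].
  intros i Hi.
  set (x := upart t0 t1 N i) in *. set (y := upart t0 t1 N (S i)) in *.
  assert (Bx := Hinn i (Nat.lt_le_incl _ _ Hi)). assert (By := Hinn (S i) Hi).
  fold x in Bx. fold y in By. assert (Hxy := Hinc i Hi). fold x y in Hxy.
  assert (Sx := Hin x Bx). assert (Sy := Hin y By).
  destruct (pair_bound s x y Hs Sy ltac:(lra) Hxy) as [P1 P2].

  assert (Hgxy : g y <= g x) by (apply Hgmon; auto; lra).
  assert (HDxy : D x <= D y).
  { apply pow_incr. assert (h x < h y) by (apply Hh_inc; auto). assert (a < h x) by (apply Hh_inc; auto; lra). lra. }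
  assert (HdD : D y - D x < e / C).
  { assert (HH2 := Hm i Hi). fold x y in HH2.
    assert (HH := Hd y x By Bx ltac:(rewrite Rabs_right; lra)).
    rewrite Rabs_right in HH; lra. }
  set (P := (g x - g y) * (D y - D x)) in *.
  assert (P1' : (Z y - Z x) * psi x <= Z y * P) by exact P1.
  assert (P2' : - (Z x * P) <= (Z y - Z x) * psi y) by exact P2.
  clear P1 P2.
  assert (HP : 0 <= P) by (apply Rmult_le_pos; lra).
  assert (HP2 : P <= (e / C) * (g x - g y)).
  { unfold P. rewrite (Rmult_comm (e / C)). apply Rmult_le_compat_l; lra. }
  destruct (HZ x Bx) as [Zx0 Zx1]. destruct (HZ y By) as [Zy0 Zy1].
  assert (Px := Hpsi x Bx). assert (Py := Hpsi y By).
  assert (Hbound : Rabs (Z y - Z x) * m0 <= Zm * P).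
  { destruct (Rle_dec (Z x) (Z y)).
    - rewrite Rabs_right by lra.
      apply Rle_trans with ((Z y - Z x) * psi x). apply Rmult_le_compat_l; lra.
      apply Rle_trans with (Z y * P). exact P1'. apply Rmult_le_compat_r; lra.
    - rewrite Rabs_left by lra. replace (- (Z y - Z x)) with (Z x - Z y) by ring.
      apply Rle_trans with ((Z x - Z y) * psi y). apply Rmult_le_compat_l; lra.
      apply Rle_trans with (Z x * P). lra. apply Rmult_le_compat_r; lra. }
  apply Rmult_le_reg_r with m0; auto.
  apply Rle_trans with (Zm * P). exact Hbound.
  replace ((Zm / m0 * (e / C) * g x - Zm / m0 * (e / C) * g y) * m0) with (Zm * ((e / C) * (g x - g y))) by (field; lra).
  apply Rmult_le_compat_l; lra.
Qed.

Lemma LIN s : Sp s -> (exists t, Sp t /\ s < t) ->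
  exists c, 0 < c /\ forall t, Sp t -> s < t -> Rf t - Rf s = c * (h t - h s).
Proof.
  intros Hs [ts [Hts Hsts]].
  assert (HR := Rf_strict s ts Hs Hts Hsts).
  assert (Hh := Hh_inc s ts Hs Hts Hsts).
  exists ((Rf ts - Rf s) / (h ts - h s)). split. apply Rdiv_lt_0_compat; lra.
  intros t Ht Hst.
  assert (HRt := Rf_strict s t Hs Ht Hst).
  assert (Hht := Hh_inc s t Hs Ht Hst).
  assert (HZ : (Rf t - Rf s) ^ S m / (h t - h s) ^ S m = (Rf ts - Rf s) ^ S m / (h ts - h s) ^ S m).
  { destruct (Rtotal_order t ts) as [Hl|[He|Hl]].
    - symmetry. exact (Z_const s t ts Hs Hts Hst Hl).
    - subst; reflexivity.
    - exact (Z_const s ts t Hs Ht Hsts Hl). }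
  rewrite <- !pow_div in HZ. apply pow_inj_pos in HZ.
  - rewrite <- HZ. field. lra.
  - apply Rdiv_le0; lra.
  - apply Rdiv_le0; lra.
Qed.

Lemma AFF s0 : Sp s0 -> (forall x, Sp x -> exists y, Sp y /\ x < y) ->
  exists c d, 0 < c /\ forall y, Sp y -> Rf y = c * h y + d.
Proof.
  intros Hs0 Hup.
  destruct (LIN s0 Hs0 (Hup s0 Hs0)) as [c [Hc Hl]].
  destruct (Hup s0 Hs0) as [t1 [Ht1 H01]].
  exists c, (Rf s0 - c * h s0). split; auto.
  intros y Hy. destruct (Rtotal_order s0 y) as [Hl'|[He|Hl']].
  - assert (HH := Hl y Hy Hl'). lra.
  - subst; ring.
  - destruct (LIN y Hy (ex_intro _ s0 (conj Hs0 Hl'))) as [cy [Hcy Hly]].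
    assert (E1 := Hly s0 Hs0 Hl'). assert (E2 := Hly t1 Ht1 ltac:(lra)).
    assert (E3 := Hl t1 Ht1 H01).
    assert (Hh01 := Hh_inc s0 t1 Hs0 Ht1 H01).
    assert (cy = c).
    { apply Rmult_eq_reg_r with (h t1 - h s0). 2: lra.
      replace (cy * (h t1 - h s0)) with (cy * (h t1 - h y) - cy * (h s0 - h y)) by ring. lra. }
    subst cy. lra.
Qed.

End Rev.


Lemma nodes_mono (x xi : nat -> R) N :
  (forall i, (i < N)%nat -> x i <= xi i <= x (S i)) ->
  forall i j, (i <= j <= N)%nat -> x i <= x j.
Proof.
  intros H i j. induction j; intros Hij.
  - assert (i = O) by lia. subst; lra.
  - destruct (Nat.eq_dec i (S j)) as [->|Hne]. lra.
    assert (H1 := IHj ltac:(lia)). assert (H2 := H j ltac:(lia)). lra.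
Qed.

Lemma cont_ext f1 f2 x : (forall y, f1 y = f2 y) -> continuity_pt f1 x -> continuity_pt f2 x.
Proof. intros H Hc. apply (continuity_pt_locally_ext f1 f2 1 x Rlt_0_1); auto. Qed.

Section Fwd.
Variables (Sp : R -> Prop) (g h Rf : R -> R) (m : nat) (c d : R).
Hypothesis Hconv : forall x y z, Sp x -> Sp z -> x <= y <= z -> Sp y.
Hypothesis Hhpos : forall y, Sp y -> 0 < h y.
Hypothesis Hh_inc : forall x y, Sp x -> Sp y -> x < y -> h x < h y.
Hypothesis Hg_h : forall y, Sp y -> g y = / h y ^ S (S m).
Hypothesis HRcont : forall y, Sp y -> continuity_pt Rf y.
Hypothesis Hc : 0 < c.
Hypothesis Haff : forall y, Sp y -> Rf y = c * h y + d.

Lemma h_le x y : Sp x -> Sp y -> x <= y -> h x <= h y.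
Proof. intros Hx Hy Hxy. destruct (Req_dec x y) as [->|]. lra. apply Rlt_le, Hh_inc; auto; lra. Qed.

Lemma g_le x y : Sp x -> Sp y -> x <= y -> g y <= g x.
Proof.
  intros Hx Hy Hxy. rewrite !Hg_h by auto. apply Rinv_le_contravar.
  apply pow_lt; auto. apply pow_incr. split. apply Rlt_le; auto. apply h_le; auto.
Qed.

Lemma forward s t : Sp s -> Sp t -> s < t ->
  RS_integral_is g (fun x => ((Rf x - Rf s) / (Rf t - Rf s)) ^ S m) s t (/ (h s * h t ^ S m)).
Proof.
  intros Hs Ht Hst.
  set (a := h s). set (b := h t).
  assert (Ha : 0 < a) by (apply Hhpos; auto).
  assert (Hab : a < b) by (apply Hh_inc; auto).
  set (B := Rf t - Rf s).
  assert (HB : B = c * (b - a)) by (unfold B, a, b; rewrite !Haff by auto; ring).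
  assert (HBp : 0 < B) by (rewrite HB; apply Rmult_lt_0_compat; lra).
  set (F := fun x => ((Rf x - Rf s) / B) ^ S m).
  assert (Hin : forall z, s <= z <= t -> Sp z) by (intros z Hz; apply (Hconv s z t); auto).
  set (K := (b - a) ^ S m).
  assert (HK : 0 < K) by (apply pow_lt; lra).
  assert (HF : forall z, Sp z -> F z = (h z - a) ^ S m / K).
  { intros z Hz. unfold F, K. rewrite <- pow_div. f_equal. rewrite HB.
    unfold a. rewrite !Haff by auto. field. unfold a in Hab. split; lra. }
  set (Phi := fun z => (h z - a) ^ S m / (a * h z ^ S m) / K).
  assert (Hunif : uniform_continuity F (fun z => s <= z <= t)).
  { apply Heine. apply compact_P3. intros z Hz.
    apply (cont_ext (comp (fun u => (u - Rf s / B) ^ S m) (fun y => / B * Rf y))).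
    { intros y. unfold comp, F. f_equal. field. lra. }
    apply continuity_pt_comp.
    apply (continuity_pt_scal Rf (/ B)). apply HRcont; auto. apply cont_powa. }
  intros eps Heps.
  assert (Hgst : g t <= g s) by (apply g_le; auto; lra).
  set (C0 := g s - g t + 1).
  assert (HC0 : 0 < C0) by (unfold C0; lra).
  destruct (Hunif (mkposreal (eps / C0) (Rdiv_lt_0_compat _ _ Heps HC0))) as [dl Hdl].
  simpl in Hdl. exists dl. split. apply cond_pos.
  intros N x xi [E0 [EN Htag]] Hmesh.
  assert (Hmono := nodes_mono x xi N Htag).
  assert (Hnd : forall i, (i <= N)%nat -> s <= x i <= t).
  { intros i Hi. rewrite <- E0, <- EN. split; apply Hmono; lia. }
  assert (Hval : / (a * b ^ S m) = Phi (x N) - Phi (x O)).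
  { rewrite E0, EN. unfold Phi. fold a b. rewrite Rminus_diag, pow_i by lia.
    unfold K. assert (0 < b ^ S m) by (apply pow_lt; lra). assert (0 < a ^ S m) by (apply pow_lt; lra). assert (0 < (b - a) ^ S m) by (apply pow_lt; lra). field. repeat split; lra. }
  rewrite Hval.
  eapply Rle_lt_trans.
  apply (RS_sum_bound g F Phi (fun z => eps / C0 * g z)).
  2: { replace (eps / C0 * g (x O) - eps / C0 * g (x N)) with (eps * ((g s - g t) / C0))
         by (rewrite E0, EN; field; lra).
       rewrite <- (Rmult_1_r eps) at 2. apply Rmult_lt_compat_l; auto.
       apply Rmult_lt_reg_r with C0; auto. unfold Rdiv. rewrite Rmult_assoc, Rinv_l by lra.
       unfold C0. lra. }
  intros i Hi.
  assert (B1 := Hnd i ltac:(lia)). assert (B2 := Hnd (S i) ltac:(lia)).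
  assert (Htg := Htag i Hi).
  assert (S1 := Hin _ B1). assert (S2 := Hin _ B2). assert (S3 := Hin (xi i) ltac:(lra)).
  rewrite !HF by auto.
  assert (Hax : a <= h (x i)) by (apply h_le; auto; lra).
  assert (H12 : h (x i) <= h (x (S i))) by (apply h_le; auto; lra).
  assert (HKL := KL a m (h (x i)) (h (x (S i))) Ha Hax H12).
  rewrite <- !Hg_h in HKL by auto.
  assert (Hg1 : g (xi i) <= g (x i)) by (apply g_le; auto; lra).
  assert (Hg2 : g (x (S i)) <= g (xi i)) by (apply g_le; auto; lra).
  set (dD := (h (x (S i)) - a) ^ S m - (h (x i) - a) ^ S m) in *.
  set (dE := (h (x (S i)) - a) ^ S m / (a * h (x (S i)) ^ S m) - (h (x i) - a) ^ S m / (a * h (x i) ^ S m)) in *.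
  assert (HdD : 0 <= dD) by (unfold dD; assert (HH := pow_incr (h (x i) - a) (h (x (S i)) - a) (S m)); lra).
  assert (Hsmall : dD / K < eps / C0).
  { assert (HH := Hdl (x (S i)) (x i) B2 B1).
    assert (Hm := Hmesh i Hi).
    rewrite (Rabs_right (x (S i) - x i)) in HH by lra.
    specialize (HH Hm). rewrite !HF in HH by auto.
    replace ((h (x (S i)) - a) ^ S m / K - (h (x i) - a) ^ S m / K) with (dD / K) in HH by (unfold dD; field; lra).
    rewrite Rabs_right in HH. exact HH. apply Rle_ge, Rdiv_le0; lra. }
  replace (g (xi i) * ((h (x (S i)) - a) ^ S m / K - (h (x i) - a) ^ S m / K) -
           (Phi (x (S i)) - Phi (x i))) with ((g (xi i) * dD - dE) / K)
    by (unfold Phi, dD, dE;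
        assert (0 < h (x i) ^ S m) by (apply pow_lt; lra);
        assert (0 < h (x (S i)) ^ S m) by (apply pow_lt; lra);
        field; repeat split; lra).
  assert (Hdiff : Rabs (g (xi i) * dD - dE) <= (g (x i) - g (x (S i))) * dD).
  { assert (g (x (S i)) * dD <= g (xi i) * dD <= g (x i) * dD) by (split; apply Rmult_le_compat_r; lra).
    apply Rabs_le. lra. }
  unfold Rdiv at 1. rewrite Rabs_mult, (Rabs_right (/ K)) by (apply Rle_ge, Rlt_le, Rinv_0_lt_compat; lra).
  apply Rle_trans with ((g (x i) - g (x (S i))) * dD * / K).
  apply Rmult_le_compat_r; [apply Rlt_le, Rinv_0_lt_compat; lra | exact Hdiff].
  replace (eps / C0 * g (x i) - eps / C0 * g (x (S i))) with ((g (x i) - g (x (S i))) * (eps / C0)) by ring.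
  rewrite Rmult_assoc. apply Rmult_le_compat_l. lra. apply Rlt_le. exact Hsmall.
Qed.
End Fwd.


Lemma supp_up G : is_cont_cdf G -> forall x, in_supp G x -> exists y, in_supp G y /\ x < y.
Proof.
  intros [Hmon [Hcont _]] x [Hx1 Hx2].
  assert (Hc := Hcont x). unfold continuity_pt, continue_in, limit1_in, limit_in in Hc.
  destruct (Hc (1 - G x) ltac:(lra)) as [alp [Halp Hz]].
  exists (x + alp / 2). assert (HH := Hz (x + alp / 2)).
  simpl in HH. unfold Rdist in HH.
  assert (Hm := Hmon x (x + alp / 2) ltac:(lra)).
  split; [split|]; try lra.
  assert (Rabs (G (x + alp / 2) - G x) < 1 - G x).
  { apply HH. split. split. exact I. lra. replace (x + alp / 2 - x) with (alp / 2) by ring.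
    rewrite Rabs_right; lra. }
  rewrite Rabs_right in H; lra.
Qed.

Lemma supp_conv G : is_cont_cdf G -> forall x y z, in_supp G x -> in_supp G z -> x <= y <= z -> in_supp G y.
Proof.
  intros [Hmon _] x y z [Hx1 Hx2] [Hz1 Hz2] [Hxy Hyz].
  assert (H1 := Hmon x y Hxy). assert (H2 := Hmon y z Hyz). split; lra.
Qed.

Lemma cont_G_minus G c : continuity G -> continuity (fun x => G x - c).
Proof.
  intros H. apply (continuity_minus G (fct_cte c)). exact H. apply continuity_const. intros a b; reflexivity.
Qed.

Lemma supp_hit G eta y0 : is_cont_cdf G -> 0 < eta -> eta < G y0 ->
  exists z, G z = eta /\ z < y0.
Proof.
  intros [Hmon [Hcont [Hlo _]]] He Hy.
  destruct (Hlo eta He) as [M HM].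
  set (x1 := Rmin M (y0 - 1)).
  assert (Hx1 : G x1 < eta) by (apply HM; unfold x1; apply Rmin_l).
  assert (Hx1y : x1 < y0) by (unfold x1; assert (HH := Rmin_r M (y0 - 1)); lra).
  destruct (IVT (fun x => G x - eta) x1 y0 (cont_G_minus G eta Hcont) Hx1y ltac:(lra) ltac:(lra)) as [z [Hz1 Hz2]].
  exists z. split. lra. destruct Hz1 as [_ [Hl|He']]; auto. subst. lra.
Qed.

Lemma supp_exists G : is_cont_cdf G -> exists z, in_supp G z.
Proof.
  intros HG. destruct HG as [Hmon [Hcont [Hlo Hhi]]].
  destruct (Hhi (1/2) ltac:(lra)) as [M2 HM2].
  assert (Hy := HM2 M2 (Rle_refl _)).
  destruct (supp_hit G (1/2) M2 (conj Hmon (conj Hcont (conj Hlo Hhi))) ltac:(lra) ltac:(lra)) as [z [Hz _]].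
  exists z. unfold in_supp. lra.
Qed.

Lemma neg_ln_small eta : 0 < eta <= 1/2 -> 0 < - ln (1 - eta) <= 2 * eta.
Proof.
  intros [H1 H2].
  assert (Hl : ln (1 - eta) < 0).
  { rewrite <- ln_1. apply ln_increasing; lra. }
  split. lra.
  set (w := eta / (1 - eta)).
  assert (Hw : 0 < w) by (unfold w; apply Rdiv_lt_0_compat; lra).
  assert (Hex := exp_ineq1 w ltac:(lra)).
  assert (E : - ln (1 - eta) = ln (1 + w)).
  { rewrite <- ln_Rinv by lra. f_equal. unfold w. field. lra. }
  rewrite E.
  assert (ln (1 + w) < w).
  { rewrite <- (ln_exp w) at 2. apply ln_increasing; lra. }
  assert (w <= 2 * eta).
  { unfold w. apply Rmult_le_reg_r with (1 - eta). lra. unfold Rdiv. rewrite Rmult_assoc, Rinv_l by lra. nra. }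
  lra.
Qed.

Theorem corollary2 (G g : R -> R) (n k : nat) (tau : R) :
  (2 <= n)%nat -> (1 <= k)%nat -> (k <= n - 1)%nat ->
  is_cont_cdf G ->
  (forall y, in_supp G y -> 0 < g y) ->
  (forall y, in_supp G y -> continuity_pt g y) ->
  (forall y z, in_supp G y -> in_supp G z -> y < z -> g z < g y) ->
  (* lim_{y -> r_G^-} g(y) = 0 *)
  (forall eps, 0 < eps -> exists y0, in_supp G y0 /\
     forall y, in_supp G y -> y0 < y -> Rabs (g y) < eps) ->
  (* tau = lim_{y -> l_G^+} [g(y)]^(-1/(k+1)) *)
  (forall eps, 0 < eps -> exists y0, in_supp G y0 /\
     forall y, in_supp G y -> y < y0 ->
       Rabs (Rpower (g y) (- (1 / (INR k + 1))) - tau) < eps) ->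
  ((forall s t, in_supp G s -> in_supp G t -> s < t ->
      cond_exp_record_is G k g s t
        (Rpower (g t) (INR k / (INR k + 1)) * Rpower (g s) (1 / (INR k + 1))))
   <->
   (exists c, 0 < c /\ forall y, in_supp G y ->
      G y = 1 - exp (- (c * (Rpower (g y) (- (1 / (INR k + 1))) - tau))))).
Proof.
  intros Hn Hk1 Hkn HG Hgpos Hgcont Hgdec Hlimr Htau.
  destruct k as [|m]; [lia|].
  set (K := INR (S m) + 1) in *.
  assert (HK : 0 < K) by (unfold K; assert (HH := pos_INR (S m)); lra).
  set (h := fun y => Rpower (g y) (- (1 / K))).
  change (forall eps, 0 < eps -> exists y0, in_supp G y0 /\
     forall y, in_supp G y -> y < y0 -> Rabs (h y - tau) < eps) in Htau.
  set (Sp := in_supp G).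
  assert (Hconv : forall x y z, Sp x -> Sp z -> x <= y <= z -> Sp y) by (apply supp_conv; auto).
  assert (Hhpos : forall y, Sp y -> 0 < h y) by (intros y _; unfold h, Rpower; apply exp_pos).
  assert (Hhpow : forall y, Sp y -> h y ^ S (S m) = / g y).
  { intros y Hy. assert (Hg := Hgpos y Hy). unfold h.
    rewrite <- Rpower_pow by (apply exp_pos).
    rewrite Rpower_mult. replace (- (1 / K) * INR (S (S m))) with (Ropp 1).
    rewrite Rpower_Ropp, Rpower_1; auto.
    rewrite (S_INR (S m)). fold K. field. lra. }
  assert (Hg_h : forall y, Sp y -> g y = / h y ^ S (S m)).
  { intros y Hy. rewrite Hhpow, Rinv_inv; auto. }
  assert (Hh_inc : forall x y, Sp x -> Sp y -> x < y -> h x < h y).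
  { intros x y Hx Hy Hxy. unfold h, Rpower. apply exp_increasing.
    assert (Hl := ln_increasing _ _ (Hgpos y Hy) (Hgdec x y Hx Hy Hxy)).
    assert (0 < 1 / K) by (apply Rdiv_lt_0_compat; lra). nra. }
  assert (Hgmon : forall x y, Sp x -> Sp y -> x <= y -> g y <= g x).
  { intros x y Hx Hy Hxy. destruct (Req_dec x y) as [->|]. lra. apply Rlt_le, Hgdec; auto; lra. }
  assert (Hh_cont : forall y, Sp y -> continuity_pt h y).
  { intros y Hy.
    apply (cont_ext (comp exp (fun z => - (1 / K) * ln (g z)))). { intros z; reflexivity. }
    apply continuity_pt_comp.
    - apply (continuity_pt_scal (fun z => ln (g z)) (- (1 / K))).
      apply (continuity_pt_comp g ln). apply Hgcont; auto.
      apply derivable_continuous_pt. exists (/ g y). apply derivable_pt_lim_ln. apply Hgpos; auto.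
    - apply derivable_continuous_pt. apply derivable_pt_exp. }
  set (Rf := Rhaz G).
  destruct HG as [HGmon [HGcont [HGlo HGhi]]] eqn:HGe.
  assert (HRmon : forall x y, Sp x -> Sp y -> x <= y -> Rf x <= Rf y).
  { intros x y [Hx1 Hx2] [Hy1 Hy2] Hxy. unfold Rf, Rhaz.
    assert (HH := HGmon x y Hxy). destruct HH as [HH|HH].
    - assert (ln (1 - G y) < ln (1 - G x)) by (apply ln_increasing; lra). lra.
    - rewrite HH. lra. }
  assert (HRcont : forall y, Sp y -> continuity_pt Rf y).
  { intros y [Hy1 Hy2]. unfold Rf, Rhaz.
    apply (cont_ext (fun z => - (comp ln (fun w => 1 - G w)) z)). { intros z; reflexivity. }
    apply (continuity_pt_opp (comp ln (fun w => 1 - G w))).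
    apply continuity_pt_comp.
    - apply (continuity_pt_minus (fct_cte 1) G). apply continuity_pt_const. intros a b; reflexivity.
      apply HGcont.
    - apply derivable_continuous_pt. exists (/ (1 - G y)). apply derivable_pt_lim_ln. lra. }
  assert (Hval : forall s t, Sp s -> Sp t ->
     Rpower (g t) (INR (S m) / K) * Rpower (g s) (1 / K) = / (h s * h t ^ S m)).
  { intros s t Hs Ht. unfold h.
    rewrite <- Rpower_pow by (apply exp_pos). rewrite Rpower_mult.
    rewrite Rinv_mult, Rmult_comm. f_equal.
    - rewrite Rpower_Ropp, Rinv_inv. reflexivity.
    - replace (INR (S m) / K) with (- (- (1 / K) * INR (S m))) by (field; lra).
      rewrite Rpower_Ropp. reflexivity. }
  assert (Hup : forall x, Sp x -> exists y, Sp y /\ x < y) by (apply supp_up; auto).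
  unfold cond_exp_record_is, cond_cdf. fold Rf.
  split.
  - intros Hident.
    assert (Hid : forall s t, Sp s -> Sp t -> s < t ->
      RS_integral_is g (fun x => ((Rf x - Rf s) / (Rf t - Rf s)) ^ S m) s t (/ (h s * h t ^ S m))).
    { intros s t Hs Ht Hst. rewrite <- Hval by auto. apply Hident; auto. }
    destruct (supp_exists G HG) as [s0 Hs0].
    destruct (AFF Sp g h Rf m Hconv HRmon Hhpos Hgmon Hid Hh_inc Hg_h Hh_cont s0 Hs0 Hup)
      as [c [d [Hc Haff]]].
    assert (Hd : c * tau + d = 0).
    { apply small_zero. intros e He.
      assert (He2 : 0 < e / (2 * c)) by (apply Rdiv_lt_0_compat; lra).
      destruct (Htau _ He2) as [y0 [Hy0 Hty]].
      set (eta := Rmin (G y0 / 2) (Rmin (1 / 2) (e / 8))).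
      assert (Heta : 0 < eta).
      { unfold eta. destruct Hy0. apply Rmin_pos. lra. apply Rmin_pos; lra. }
      assert (Heta1 : eta < G y0) by (unfold eta; destruct Hy0; assert (HH := Rmin_l (G y0 / 2) (Rmin (1/2) (e/8))); lra).
      assert (Heta2 : eta <= 1 / 2) by (unfold eta; assert (HH := Rmin_r (G y0 / 2) (Rmin (1/2) (e/8))); assert (HH2 := Rmin_l (1/2) (e/8)); lra).
      assert (Heta3 : eta <= e / 8) by (unfold eta; assert (HH := Rmin_r (G y0 / 2) (Rmin (1/2) (e/8))); assert (HH2 := Rmin_r (1/2) (e/8)); lra).
      destruct (supp_hit G eta y0 HG Heta Heta1) as [z [Hz Hzy]].
      assert (Sz : Sp z) by (unfold Sp, in_supp; lra).
      assert (Hhz := Hty z Sz Hzy).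
      assert (HRz : Rf z = - ln (1 - eta)) by (unfold Rf, Rhaz; rewrite Hz; reflexivity).
      assert (HRz2 := neg_ln_small eta (conj Heta Heta2)).
      assert (Ez := Haff z Sz).
      replace (c * tau + d) with (Rf z - c * (h z - tau)) by lra.
      eapply Rle_lt_trans. apply Rabs_triang. rewrite Rabs_Ropp, Rabs_mult, (Rabs_right c) by lra.
      rewrite Rabs_right by lra.
      assert (c * Rabs (h z - tau) < c * (e / (2 * c))) by (apply Rmult_lt_compat_l; auto).
      replace (c * (e / (2 * c))) with (e / 2) in H by (field; lra). lra. }
    exists c. split; auto. intros y Hy.
    assert (E := Haff y Hy). unfold Rf, Rhaz in E.
    change (Rpower (g y) (- (1 / K))) with (h y).
    replace (- (c * (h y - tau))) with (ln (1 - G y)) by lra.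
    destruct Hy. rewrite exp_ln by lra. ring.
  - intros [c [Hc Hform]] s t Hs Ht Hst.
    rewrite Hval by auto.
    apply (forward Sp g h Rf m c (- (c * tau)) Hconv Hhpos Hh_inc Hg_h HRcont Hc); auto.
    intros y Hy. unfold Rf, Rhaz. rewrite (Hform y Hy).
    change (Rpower (g y) (- (1 / K))) with (h y).
    replace (1 - (1 - exp (- (c * (h y - tau))))) with (exp (- (c * (h y - tau)))) by ring.
    rewrite ln_exp. ring.
Qed.
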